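(* The set $\mathbf{Sch}$ of all Schröder partitions, ordered by $\lambda\le\mu$ iff $\lambda_i\le\mu_i$ for all $i$, is a distributive lattice.
   Context: A Schröder partition is an integer partition in which every odd part has multiplicity at most $1$. In the order, parts beyond the length of a partition are taken to be $0$ (equivalently, $\lambda=(\lambda_1,\dots,\lambda_h)\le\mu=(\mu_1,\dots,\mu_k)$ iff $h\le k$ and $\lambda_i\le\mu_i$ for $i\le h$); this is containment of the corresponding shapes drawn with common top-left corner. *)

(* Defs.v *)
From mathcomp Require Export all_boot.
Set Implicit Arguments. Unset Strict Implicit. Unset Printing Implicit Defensive.

Definition is_partition (s : seq nat) : Prop :=
  sorted geq s /\ all (fun x => 0 < x) s.

Definition schroder (s : seq nat) : Prop :=
  is_partition s /\ forall k, odd k -> count_mem k s <= 1.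

Definition part_le (l m : seq nat) : Prop :=
  size l <= size m /\ forall i, i < size l -> nth 0 l i <= nth 0 m i.

(* Main.v *)
Require Import Defs.
From mathcomp Require Import zify.
Set Implicit Arguments. Unset Strict Implicit.

Lemma part_pos s i : is_partition s -> i < size s -> 0 < nth 0 s i.
Proof. by case=> _ /all_nthP H /H. Qed.

Lemma part_mono s i : is_partition s -> nth 0 s i.+1 <= nth 0 s i.
Proof.
case=> /sortedP H _.
case: (ltnP i.+1 (size s)) => Hi; first exact: (H 0 i Hi).
by rewrite (nth_default 0 Hi).
Qed.

Lemma part_leP l m : is_partition l ->
  (part_le l m <-> forall i, nth 0 l i <= nth 0 m i).
Proof.
move=> Pl; split.
  case=> Hs H i; case: (ltnP i (size l)) => Hi; first exact: H.
  by rewrite nth_default.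
move=> H; split; last by move=> i _; exact: H.
rewrite leqNgt; apply/negP => Hlt.
have := H (size m); rewrite (nth_default 0 (leqnn _)).
by have := part_pos Pl Hlt; lia.
Qed.

Lemma geq_trans' : transitive geq.
Proof. move=> a b c /= H1 H2; exact: leq_trans H2 H1. Qed.

Lemma count2_adj s k : sorted geq s -> 1 < count_mem k s ->
  exists i, [/\ i.+1 < size s, nth 0 s i = k & nth 0 s i.+1 = k].
Proof.
elim: s => [|a t IH] //= Hs.
have Ht : sorted geq t by move: Hs; case: t {IH} => //= b t /andP[].
case: (eqVneq a k) => [Ha|Ha]; last first.
  rewrite add0n => /(IH Ht) [i [H1 H2 H3]]; by exists i.+1.
subst a => Hc.
have : k \in t by rewrite -has_pred1 has_count.
idtac.
case: t Hs Ht {IH Hc} => [|b t] //= /andP[Hkb Hp] Ht.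
rewrite in_cons => /orP[/eqP->|Hk]; first by exists 0.
have := order_path_min geq_trans' Hp => /allP /(_ _ Hk) /= Hbk.
exists 0; split => //=; lia.
Qed.

Lemma adj_count2 s k i : i.+1 < size s -> nth 0 s i = k -> nth 0 s i.+1 = k ->
  1 < count_mem k s.
Proof.
elim: s i => [|a t IH] [|i] //=.
  case: t {IH} => [|b t] //= _ -> ->; rewrite eqxx /=; lia.
move=> Hi H1 H2; apply: leq_trans (IH i Hi H1 H2) _; exact: leq_addl.
Qed.

Definition meet (l m : seq nat) :=
  mkseq (fun i => minn (nth 0 l i) (nth 0 m i)) (minn (size l) (size m)).
Definition join (l m : seq nat) :=
  mkseq (fun i => maxn (nth 0 l i) (nth 0 m i)) (maxn (size l) (size m)).

Lemma nth_meet l m i : nth 0 (meet l m) i = minn (nth 0 l i) (nth 0 m i).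
Proof.
rewrite /meet; case: (ltnP i (minn (size l) (size m))) => Hi.
  by rewrite nth_mkseq.
rewrite nth_default ?size_mkseq //.
case: (leqP (size l) (size m)) => Hs.
  rewrite (nth_default 0 (_ : size l <= i)); first by rewrite min0n.
  lia.
rewrite (nth_default 0 (_ : size m <= i)); first by rewrite minn0.
lia.
Qed.

Lemma nth_join l m i : nth 0 (join l m) i = maxn (nth 0 l i) (nth 0 m i).
Proof.
rewrite /join; case: (ltnP i (maxn (size l) (size m))) => Hi.
  by rewrite nth_mkseq.
rewrite nth_default ?size_mkseq // !nth_default //; lia.
Qed.

Lemma size_meet l m : size (meet l m) = minn (size l) (size m).
Proof. by rewrite size_mkseq. Qed.
Lemma size_join l m : size (join l m) = maxn (size l) (size m).
Proof. by rewrite size_mkseq. Qed.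

Lemma nth_pos s i : 0 < nth 0 s i -> i < size s.
Proof. by case: (ltnP i (size s)) => // H; rewrite nth_default. Qed.

Lemma schroder_meet l m : schroder l -> schroder m -> schroder (meet l m).
Proof.
move=> [Pl Sl] [Pm Sm].
have Pmt : is_partition (meet l m).
  split.
    apply/(sortedP 0) => i _ /=; rewrite !nth_meet.
    have := part_mono i Pl; have := part_mono i Pm; lia.
  apply/(all_nthP 0) => i; rewrite size_meet nth_meet => Hi.
  have := part_pos Pl (_ : i < size l); have := part_pos Pm (_ : i < size m).
  lia.
split => // k Hk; rewrite leqNgt; apply/negP => /(count2_adj Pmt.1).
move=> [i [Hi]]; rewrite !nth_meet => H1 H2.
have k0 : 0 < k by case: k Hk {H1 H2}.
have := part_mono i Pl; have := part_mono i Pm => M1 M2.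
case: (leqP (nth 0 l i) (nth 0 m i)) => Hc.
  have E1 : nth 0 l i = k by lia.
  have E2 : nth 0 l i.+1 = k by lia.
  have := Sl k Hk; have := adj_count2 (nth_pos (_ : 0 < nth 0 l i.+1)) E1 E2.
  rewrite E2 => /(_ k0); lia.
have E1 : nth 0 m i = k by lia.
have E2 : nth 0 m i.+1 = k by lia.
have := Sm k Hk; have := adj_count2 (nth_pos (_ : 0 < nth 0 m i.+1)) E1 E2.
rewrite E2 => /(_ k0); lia.
Qed.

Lemma schroder_join l m : schroder l -> schroder m -> schroder (join l m).
Proof.
move=> [Pl Sl] [Pm Sm].
have Pmt : is_partition (join l m).
  split.
    apply/(sortedP 0) => i _ /=; rewrite !nth_join.
    have := part_mono i Pl; have := part_mono i Pm; lia.
  apply/(all_nthP 0) => i; rewrite size_join nth_join => Hi.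
  case: (ltnP i (size l)) => H.
    have := part_pos Pl H; lia.
  have := part_pos Pm (_ : i < size m); lia.
split => // k Hk; rewrite leqNgt; apply/negP => /(count2_adj Pmt.1).
move=> [i [Hi]]; rewrite !nth_join => H1 H2.
have k0 : 0 < k by case: k Hk {H1 H2}.
have := part_mono i Pl; have := part_mono i Pm => M1 M2.
case: (leqP (nth 0 l i.+1) (nth 0 m i.+1)) => Hc.
  have E1 : nth 0 m i = k by lia.
  have E2 : nth 0 m i.+1 = k by lia.
  have := Sm k Hk; have := adj_count2 (nth_pos (_ : 0 < nth 0 m i.+1)) E1 E2.
  rewrite E2 => /(_ k0); lia.
have E1 : nth 0 l i = k by lia.
have E2 : nth 0 l i.+1 = k by lia.
have := Sl k Hk; have := adj_count2 (nth_pos (_ : 0 < nth 0 l i.+1)) E1 E2.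
rewrite E2 => /(_ k0); lia.
Qed.

Theorem mainTheorem5 :
  (forall l, schroder l -> part_le l l) /\
  (forall l m, schroder l -> schroder m -> part_le l m -> part_le m l -> l = m) /\
  (forall l m n, schroder l -> schroder m -> schroder n ->
     part_le l m -> part_le m n -> part_le l n) /\
  exists meet join : seq nat -> seq nat -> seq nat,
    (forall l m, schroder l -> schroder m ->
       [/\ schroder (meet l m), part_le (meet l m) l, part_le (meet l m) m
         & forall x, schroder x -> part_le x l -> part_le x m ->
             part_le x (meet l m)]) /\
    (forall l m, schroder l -> schroder m ->
       [/\ schroder (join l m), part_le l (join l m), part_le m (join l m)
         & forall x, schroder x -> part_le l x -> part_le m x ->
             part_le (join l m) x]) /\
    (forall x y z, schroder x -> schroder y -> schroder z ->
       meet x (join y z) = join (meet x y) (meet x z)).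
Proof.
split; first by move=> l _; split.
split.
  move=> l m [Pl _] [Pm _] /(part_leP _ Pl) H1 /(part_leP _ Pm) H2.
  apply: (@eq_from_nth _ 0).
    apply/eqP; rewrite eqn_leq; apply/andP; split; rewrite leqNgt; apply/negP => Hlt.
      have := part_pos Pl Hlt; have := H1 (size m).
      rewrite (nth_default 0 (leqnn _)); lia.
    have := part_pos Pm Hlt; have := H2 (size l).
    rewrite (nth_default 0 (leqnn _)); lia.
  move=> i _; have := H1 i; have := H2 i; lia.
split.
  move=> l m n [Pl _] [Pm _] _ /(part_leP _ Pl) H1 /(part_leP _ Pm) H2.
  apply/(part_leP _ Pl) => i; exact: leq_trans (H1 i) (H2 i).
exists meet, join; split; last split.
- move=> l m Sl Sm; have Smt := schroder_meet Sl Sm.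
  have Pmt := Smt.1.
  split => //.
  + apply/(part_leP _ Pmt) => i; rewrite nth_meet; exact: geq_minl.
  + apply/(part_leP _ Pmt) => i; rewrite nth_meet; exact: geq_minr.
  + move=> x [Px _] /(part_leP _ Px) H1 /(part_leP _ Px) H2.
    apply/(part_leP _ Px) => i; rewrite nth_meet leq_min H1 H2 //.
- move=> l m Sl Sm; have Smt := schroder_join Sl Sm.
  have Pmt := Smt.1.
  split => //.
  + apply/(part_leP _ Sl.1) => i; rewrite nth_join; exact: leq_maxl.
  + apply/(part_leP _ Sm.1) => i; rewrite nth_join; exact: leq_maxr.
  + move=> x _ /(part_leP _ Sl.1) H1 /(part_leP _ Sm.1) H2.
    apply/(part_leP _ Pmt) => i; rewrite nth_join geq_max H1 H2 //.
- move=> x y z _ _ _.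
  apply: (@eq_from_nth _ 0).
    rewrite !size_meet !size_join !size_meet; lia.
  move=> i _; rewrite !nth_meet !nth_join !nth_meet; lia.
Qed.
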